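(* Consider the following two-bidder auction. A single good has common value $v$ with CDF $F_v$, density $f_v$, support $\mathbb{R}_+$ and finite mean, and $\mathbb{E}[v]>L\ge 0$. Alice submits a bid knowing only $F_v$; then $v$ is realized and Bob, observing $v$ but not Alice's bid, submits a bid. The highest bid wins and pays its bid (payoff $v$ minus bid) unless it is strictly below the limit price $L$, in which case the good is unsold. If the bids tie, Bob wins; if Bob's bid equals $L$ he can win; a winning bid of Alice equal exactly to $L$ results in no sale. Then there is no (perfect Bayesian Nash) equilibrium in which Alice uses a pure strategy.
   Context: Bidders are risk neutral. *)

(* Defs.v *)
From HB Require Import structures.
From mathcomp Require Import all_boot all_order all_algebra.
From mathcomp Require Import all_classical all_reals all_analysis.
Set Implicit Arguments. Unset Strict Implicit. Unset Printing Implicit Defensive.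
Import Order.TTheory GRing.Theory Num.Theory.
Local Open Scope ring_scope.

Definition payA {R : realType} (L a b v : R) : R :=
  if (b < a) && (L < a) then v - a else 0.

Definition payB {R : realType} (L a b v : R) : R :=
  if (a <= b) && (L <= b) then v - b else 0.

Local Open Scope ereal_scope.

Definition utilA {R : realType} (P : probability R R) (k : R.-pker R ~> R)
  (L a : R) : \bar R :=
  \int[P]_v (\int[k v]_b (payA L a b v)%:E).

Definition utilB {R : realType} (k : R.-pker R ~> R) (L a v : R) : \bar R :=
  \int[k v]_b (payB L a b v)%:E.

(* Perfect Bayesian Nash equilibrium in which Alice plays the pure bid a and
   Bob plays the behavioural strategy k: Bob (who observes v, and whose belief
   about Alice's bid is correct, i.e. the point mass at a) best-responds at
   every realizable value v >= 0, and Alice's bid a is optimal given k. *)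
Definition pure_alice_equilibrium {R : realType} (P : probability R R)
  (L a : R) (k : R.-pker R ~> R) : Prop :=
  (forall v : R, (0 <= v)%R -> forall b' : R, (payB L a b' v)%:E <= utilB k L a v)
  /\ (forall a' : R, utilA P k L a' <= utilA P k L a).

(* Main.v *)
Require Import Defs.
From HB Require Import structures.
From mathcomp Require Import all_boot all_order all_algebra.
From mathcomp Require Import all_classical all_reals all_analysis.
From mathcomp Require Import measurable_realfun lra.
Import Order.TTheory GRing.Theory Num.Theory.
Local Open Scope ring_scope.
Local Open Scope classical_set_scope.
Local Open Scope ereal_scope.

Lemma mono_int d (T : measurableType d) (R : realType) (mu : {measure set T -> \bar R})
  (f g : T -> \bar R) : measurable_fun [set: T] f -> measurable_fun [set: T] g ->
  (forall x, f x <= g x) -> \int[mu]_x f x <= \int[mu]_x g x.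
Proof.
move=> mf mg fg; rewrite integralE [leRHS]integralE; apply: leeB.
- apply: ge0_le_integral => //.
  + exact: measurable_funepos.
  + exact: measurable_funepos.
  + by move=> x _; exact: (@funepos_le _ _ setT f g (fun y _ => fg y) x (mem_set I)).
- apply: ge0_le_integral => //.
  + exact: measurable_funeneg.
  + exact: measurable_funeneg.
  + by move=> x _; exact: (@funeneg_le _ _ setT f g (fun y _ => fg y) x (mem_set I)).
Qed.

Lemma int_bdd (R : realType) (mu : {measure set R -> \bar R}) (g : R -> R) (M : R) :
  mu setT = 1 -> measurable_fun [set: R] g -> (forall x, `|g x| <= M)%R ->
  mu.-integrable setT (EFin \o g).
Proof.
move=> mu1 mg gM; apply/integrableP; split; first exact: measurableT_comp.
apply: (@le_lt_trans _ _ (\int[mu]_x (cst M%:E) x)).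
  apply: ge0_le_integral => //.
  - by apply: measurableT_comp => //; exact: measurableT_comp.
  - by move=> x _ /=; rewrite lee_fin.
rewrite (@integral_cst _ _ _ mu setT measurableT M%:E) mu1 mule1; exact: ltry.
Qed.

Lemma bob_null (R : realType) (mu : {measure set R -> \bar R}) (g : R -> R) (c e : R) (S : set R) :
  mu setT = 1 -> measurable S -> measurable_fun [set: R] g -> (0 < e)%R ->
  (forall b, g b <= c)%R -> (forall b, S b -> g b <= c - e)%R ->
  c%:E <= \int[mu]_b (g b)%:E -> mu S = 0.
Proof.
move=> mu1 mS mg e0 gc gS hc.
have mh : measurable_fun [set: R] (fun b => c - e * \1_S b)%R.
  apply: measurable_funB => //; apply: measurable_funM => //.
have le1 : \int[mu]_b (g b)%:E <= \int[mu]_b (c - e * \1_S b)%:E.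
  apply: mono_int.
  - exact: measurableT_comp.
  - exact: measurableT_comp.
  move=> b; rewrite lee_fin indicE; case: (boolP (b \in S)) => [/set_mem Sb|_].
    by rewrite mulr1; exact: gS.
  by rewrite mulr0 subr0.
have E : \int[mu]_b (c - e * \1_S b)%:E = c%:E - e%:E * mu S.
  rewrite (eq_integral (fun b => (cst c b)%:E - (e * \1_S b)%:E)); last first.
    by move=> b _; rewrite EFinB.
  rewrite integralB_EFin //; last 2 first.
  - apply: (@int_bdd _ _ _ `|c|) => //.
  - apply: (@int_bdd _ _ _ e) => //.
      by apply: measurable_funM => //; exact: measurable_indic.
    move=> x; rewrite indicE; case: (_ \in _); rewrite ?mulr1 ?mulr0 ?normr0.
      by rewrite ger0_norm // ltW.
    exact: ltW.
  rewrite (@integral_cst _ _ _ mu setT measurableT c%:E) mu1 mule1; congr (_ - _).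
  rewrite (eq_integral (fun b => e%:E * (\1_S b)%:E)); last by move=> b _; rewrite EFinM.
  rewrite ge0_integralZl //; last 2 first.
  - exact/measurableT_comp/measurable_indic.
  - by rewrite lee_fin ltW.
  by rewrite integral_indic // setIT.
have : c%:E <= c%:E - e%:E * mu S by rewrite -E (le_trans hc le1).
rewrite lee_suber_addr // -{2}(adde0 c%:E) leeD2lE // => h.
apply/eqP; rewrite eq_le measure_ge0 andbT.
by rewrite -(@pmule_rle0 _ e%:E) ?lte_fin.
Qed.


Lemma compl1 (R : realType) (mu : {measure set R -> \bar R}) (a : R) :
  mu setT = 1 -> mu `[a, +oo[ = 0 -> mu `]-oo, a[ = 1.
Proof.
move=> mu1 h0; rewrite -mu1 -(setUv `]-oo, a[) measureU //=.
- by rewrite setCitvl h0 adde0.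
- by rewrite setCitvl.
- by rewrite setICr.
Qed.

Lemma mem_ritv (R : realType) (a b : R) : (b \in `[a, +oo[) = (a <= b)%R.
Proof. by rewrite /= set_itvE; apply/idP/idP => [/set_mem|?] //; apply/mem_set. Qed.

Lemma mem_litv (R : realType) (a b : R) : (b \in `]-oo, a[) = (b < a)%R.
Proof. by rewrite /= set_itvE; apply/idP/idP => [/set_mem|?] //; apply/mem_set. Qed.

Lemma mem_oo (R : realType) (x y b : R) : (b \in `]x, y[) = (x < b < y)%R.
Proof. by rewrite /= set_itvE; apply/idP/idP => [/set_mem|?] //; apply/mem_set. Qed.

Lemma payB_eq (R : realType) (L a v : R) :
  (fun b => payB L a b v) =
  (fun b => (v - b) * \1_(`[a, +oo[) b * \1_(`[L, +oo[) b)%R.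
Proof.
apply/funext => b; rewrite /payB !indicE !mem_ritv.
by case: (a <= b)%R; case: (L <= b)%R; rewrite /= ?mulr1 ?mulr0.
Qed.

Lemma payB_meas (R : realType) (L a v : R) :
  measurable_fun [set: R] (fun b => payB L a b v).
Proof.
rewrite payB_eq; apply: measurable_funM => //; apply: measurable_funM => //.
exact: measurable_funB.
Qed.

Lemma payA_eq (R : realType) (L a v : R) : (L < a)%R ->
  (fun b => payA L a b v) = (fun b => (v - a) * \1_(`]-oo, a[) b)%R.
Proof.
move=> La; apply/funext => b; rewrite /payA indicE La andbT.
rewrite mem_litv.
by case: ifP => _; rewrite ?mulr1 ?mulr0.
Qed.

Lemma inner_payA (R : realType) (mu : {measure set R -> \bar R}) (L a v : R) :
  mu setT = 1 -> (L < a)%R ->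
  \int[mu]_b (payA L a b v)%:E = (v - a)%:E * mu `]-oo, a[.
Proof.
move=> mu1 La.
rewrite (eq_integral (fun b => (v - a)%:E * (\1_(`]-oo, a[) b)%:E)); last first.
  by move=> b _; have := congr1 (fun f => f b) (@payA_eq _ L a v La); rewrite /= => ->; rewrite EFinM.
rewrite integralZl //; last first.
  apply: (@int_bdd _ _ _ 1) => // x; rewrite indicE; case: (_ \in _) => /=.
    by rewrite normr1.
  by rewrite normr0.
by rewrite integral_indic // setIT.
Qed.

Lemma inner_payA0 (R : realType) (mu : {measure set R -> \bar R}) (L a v : R) :
  (a <= L)%R -> \int[mu]_b (payA L a b v)%:E = 0.
Proof.
move=> aL; rewrite (eq_integral (cst 0)); first exact: integral0.
by move=> b _; rewrite /payA (ltNge L a) aL andbF.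
Qed.

Local Close Scope ereal_scope.

Theorem lemma1 (R : realType) (P : probability R R) (f : R -> R) (L : R) :
  measurable_fun setT f ->
  (forall x, (0 <= f x)%R) ->
  (forall A : set R, measurable A ->
     P A = (\int[lebesgue_measure]_(x in A) (f x)%:E)%E) ->
  P `]-oo, 0[ = 0%E ->
  (forall x y : R, (0 <= x)%R -> (x < y)%R -> (0 < P `]x, y[)%E) ->
  P.-integrable setT (fun v : R => v%:E) ->
  (0 <= L)%R ->
  (L%:E < \int[P]_v v%:E)%E ->
  ~ (exists (a : R) (k : R.-pker R ~> R), pure_alice_equilibrium P L a k).
Proof.
Local Open Scope ereal_scope.
move=> mf f0 Pf Pneg Ppos intv L0 EL [a [k [hB hA]]].
have k1 : forall v, k v setT = 1 by move=> v; exact: prob_kernel.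
have P1 : P setT = 1 by exact: probability_setT.
have mkA : forall A, measurable A -> measurable_fun [set: R] (fun v => k v A).
  by move=> A mA; exact: measurable_kernel.
have bob : forall v b' e S, (0 <= v)%R -> measurable S -> (0 < e)%R ->
    (forall b, payB L a b v <= payB L a b' v)%R ->
    (forall b, S b -> payB L a b v <= payB L a b' v - e)%R -> k v S = 0.
  move=> v b' e S v0 mS e0 H1 H2.
  exact: (@bob_null R (k v) (fun b => payB L a b v) (payB L a b' v) e S (k1 v) mS (payB_meas _ L a v) e0 H1 H2 (hB v v0 b')).
have UA : forall a', (L < a')%R ->
    utilA P k L a' = \int[P]_v ((v - a')%:E * k v `]-oo, a'[).
  by move=> a' La'; rewrite /utilA; apply: eq_integral => v _; exact: inner_payA.
have U0 : forall a', (a' <= L)%R -> utilA P k L a' = 0.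
  move=> a' aL; rewrite /utilA (eq_integral (cst 0)); first exact: integral0.
  by move=> v _; exact: inner_payA0.
have mI : forall a', measurable_fun [set: R] (fun v => (v - a')%:E * k v `]-oo, a'[).
  move=> a'; apply: emeasurable_funM; last exact: mkA.
  by apply: measurableT_comp => //; exact: measurable_funB.
have negN : forall x : R, `]-oo, 0%R[ x <-> (x < 0)%R.
  by move=> x; rewrite /= in_itv.
case: (ltP L a) => [La | aL].
- have h0 := hA L; rewrite U0 ?lexx // UA // in h0.
  pose J := fun v : R => ((v - a)%:E * k v `]-oo, a[) * (\1_(`[0%R, +oo[) v)%:E.
  have IJ : \int[P]_v ((v - a)%:E * k v `]-oo, a[) = \int[P]_v J v.
    apply: (ae_eq_integral J) => //.
      apply: emeasurable_funM; first exact: mI.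
      exact: measurableT_comp.
    exists `]-oo, 0%R[; split => // x /= /not_implyP [_ hx].
    apply/negN; rewrite ltNge; apply/negP => x0; apply: hx.
    by rewrite /J indicE mem_ritv x0 mule1.
  pose h := fun v : R => ((- (a / 2)) * \1_(`]0%R, (a / 2)%R[) v)%R.
  have Jh : forall v, J v <= (h v)%:E.
    move=> v; rewrite /J /h !indicE mem_ritv mem_oo.
    case: (leP 0%R v) => v0; last first.
      by rewrite mule0 (ltNge 0%R v) (ltW v0) /= mulr0.
    rewrite mule1; case: (boolP (0 < v < a / 2)%R) => hv.
      have kS : k v `[a, +oo[ = 0.
        apply: (bob v (a - 1)%R (a - v)%R) => //.
        - by move: hv => /andP[? ?]; lra.
        - move=> b; rewrite /payB.
          have -> : (a <= a - 1)%R = false by apply/negbTE; rewrite -ltNge; lra.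
          rewrite /=; case: ifP => // /andP[ab _]; move: hv => /andP[? ?]; lra.
        - move=> b; rewrite /= in_itv /= andbT => ab; rewrite /payB ab /=.
          have -> : (L <= b)%R by lra.
          have -> : (a <= a - 1)%R = false by apply/negbTE; rewrite -ltNge; lra.
          rewrite /=; lra.
      rewrite (compl1 _ _ _ (k1 v) kS) mule1 lee_fin mulr1.
      by move: hv => /andP[? ?]; lra.
    rewrite mulr0; case: (leP v a) => va.
      by apply: mule_le0_ge0; [rewrite lee_fin; lra | exact: measure_ge0].
    have kS : k v `]-oo, a[ = 0.
      apply: (bob v a (v - a)%R) => //.
      - by lra.
      - move=> b; rewrite /payB lexx (ltW La) /=.
        case: ifP => [/andP[ab _]|_]; lra.
      - move=> b; rewrite /= in_itv /= => ba; rewrite /payB lexx (ltW La) /=.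
        have -> : (a <= b)%R = false by apply/negbTE; rewrite -ltNge.
        rewrite /=; lra.
    by rewrite kS mule0.
  have Eh : \int[P]_v (h v)%:E = (- (a / 2))%:E * P `]0%R, (a / 2)%R[.
    rewrite (eq_integral (fun v => (- (a / 2))%:E * (\1_(`]0%R, (a / 2)%R[) v)%:E)); last first.
      by move=> v _; rewrite /h EFinM.
    rewrite integralZl //; last first.
      apply: (@int_bdd _ _ _ 1%R) => // x; rewrite indicE; case: (_ \in _) => /=.
        by rewrite normr1.
      by rewrite normr0.
    by rewrite integral_indic // setIT.
  have hneg : \int[P]_v (h v)%:E < 0.
    rewrite Eh; apply: mule_lt0_gt0; first by rewrite lte_fin; lra.
    by apply: Ppos => //; lra.
  have : \int[P]_v J v <= \int[P]_v (h v)%:E.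
    apply: mono_int => //.
    - apply: emeasurable_funM; [exact: mI | exact/measurableT_comp/measurable_indic].
    - apply: measurableT_comp => //; apply: measurable_funM => //.
  move: h0; rewrite IJ => h0 hJ.
  have := le_lt_trans (le_trans h0 hJ) hneg.
  by rewrite ltxx.
- have fin : \int[P]_v v%:E \is a fin_num by exact: integrable_fin_num.
  pose m := fine (\int[P]_v v%:E).
  have Em : \int[P]_v v%:E = m%:E by rewrite /m fineK.
  have Lm : (L < m)%R by rewrite -lte_fin -Em.
  pose a' := ((L + m) / 2)%R.
  have La' : (L < a')%R by rewrite /a'; lra.
  have a'm : (a' < m)%R by rewrite /a'; lra.
  have h0 := hA a'; rewrite (U0 a aL) UA // in h0.
  pose J := fun v : R => (v - a')%:E.
  have IJ : \int[P]_v ((v - a')%:E * k v `]-oo, a'[) = \int[P]_v J v.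
    apply: (ae_eq_integral J) => //.
      by apply: measurableT_comp => //; exact: measurable_funB.
    exists `]-oo, 0%R[; split => // x /= /not_implyP [_ hx].
    apply/negN; rewrite ltNge; apply/negP => x0; apply: hx.
    have kS : k x `[a', +oo[ = 0.
      case: (leP L x) => Lx.
        apply: (bob x L (a' - L)%R) => //.
        - by lra.
        - move=> b; rewrite /payB aL lexx /=.
          by case: ifP => [/andP[_ Lb]|_]; lra.
        - move=> b; rewrite /= in_itv /= andbT => ab; rewrite /payB aL lexx /=.
          have -> : (a <= b)%R by lra.
          have -> : (L <= b)%R by lra.
          rewrite /=; lra.
      apply: (bob x (L - 1)%R (a' - x)%R) => //.
      - by lra.
      - move=> b; rewrite /payB.
        have -> : (L <= L - 1)%R = false by apply/negbTE; rewrite -ltNge; lra.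
        rewrite andbF /=.
        by case: ifP => [/andP[_ Lb]|_]; lra.
      - move=> b; rewrite /= in_itv /= andbT => ab; rewrite /payB.
        have -> : (L <= L - 1)%R = false by apply/negbTE; rewrite -ltNge; lra.
        rewrite andbF.
        have -> : (a <= b)%R by lra.
        have -> : (L <= b)%R by lra.
        rewrite /=; lra.
    by rewrite (compl1 _ _ _ (k1 x) kS) mule1.
  rewrite IJ in h0.
  have E2 : \int[P]_v J v = (m - a')%:E.
    rewrite (eq_integral (fun v : R => ((v%:E) - (cst a' v)%:E)%E)); last first.
      by move=> v _; rewrite /J EFinB.
    rewrite integralB_EFin //; last first.
      apply: (@int_bdd _ _ _ `|a'|) => //.
    rewrite Em (@integral_cst _ _ _ P setT measurableT a'%:E). rewrite EFinB; congr (_ - _); rewrite -[RHS]mule1; congr (_ * _); exact: probability_setT.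
  move: h0; rewrite E2 lee_fin; lra.
Qed.
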